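(* Let $r\in\{0,\ldots,N\}$ and suppose $\xi_r(\varpi^N)<1/2$. Then for all $A,A'\in\mathbb{R}^{n\times s}$, $$\|\phi(A')-\phi(A)\|_1\le \frac{1}{1-2\xi_r(\varpi^N)}\big(\delta_r(A')+\delta_r(A)\big).$$
   Context: Data: integers $n,s,N\ge1$ and a dataset $\varpi^N=((x_1,y_1),\ldots,(x_N,y_N))$ with $x_t\in\mathbb{R}^n$, $y_t\in\mathbb{R}$. Let $\mathbb{T}=\{1,\ldots,N\}$, $\mathbb{S}=\{1,\ldots,s\}$. For $A=[a_1\ \cdots\ a_s]\in\mathbb{R}^{n\times s}$, $\sigma_A:\mathbb{T}\to\mathbb{S}$ is a switching signal satisfying $\sigma_A(t)\in\arg\min_{i\in\mathbb{S}}|y_t-x_t^\top a_i|$ for all $t$, selected uniquely by a fixed rule depending only on $A$ and the data (among all admissible choices, one maximizing $\min_{i}|I_i(A)|$, ties then broken by assigning the smallest admissible index). $I_i(A)=\{t\in\mathbb{T}:\sigma_A(t)=i\}$. Define $\phi(A)=\big(y_1-x_1^\top a_{\sigma_A(1)},\ldots,y_N-x_N^\top a_{\sigma_A(N)}\big)^\top\in\mathbb{R}^N$ and $\mathcal{J}(A)=\|\phi(A)\|_1$. For $\mathcal{T}\subset\mathbb{T}$, $\phi_{\mathcal{T}}(A)$ is the subvector of $\phi(A)$ indexed by $\mathcal{T}$. $\mathcal{S}_r=\{w\in\mathbb{R}^N:\|w\|_0\le r\}$, and $\delta_r(A)=\inf_{w\in\mathcal{S}_r}\|\phi(A)-w\|_1$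 (sum of the $N-r$ smallest absolute entries of $\phi(A)$). The $r$-th concentration ratio is $$\xi_r(\varpi^N)=\sup\Big\{\frac{\|\phi_{\mathcal{T}}(A)-\phi_{\mathcal{T}}(A')\|_1}{\|\phi(A)-\phi(A')\|_1}: A,A'\in\mathbb{R}^{n\times s},\ \mathcal{T}\subset\mathbb{T},\ \phi(A)\ne\phi(A'),\ |\mathcal{T}|\le r\Big\}.$$ *)

(* Defs.v *)
From HB Require Import structures.
From mathcomp Require Import all_boot all_order all_algebra.
From mathcomp Require Import classical_sets reals.
Set Implicit Arguments. Unset Strict Implicit. Unset Printing Implicit Defensive.
Import Order.TTheory GRing.Theory Num.Theory.
Local Open Scope ring_scope.
Local Open Scope classical_set_scope.

Section Switched.
Variables (R : realType) (n s N : nat).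
Variables (x : 'I_N -> 'rV[R]_n) (y : 'I_N -> R).

Definition resid (A : 'M[R]_(n, s)) (t : 'I_N) (i : 'I_s) : R :=
  y t - (x t *m col i A) 0 0.

Definition admissible (A : 'M[R]_(n, s)) (sg : {ffun 'I_N -> 'I_s}) : bool :=
  [forall t, [forall i, `|resid A t (sg t)| <= `|resid A t i|]].

Definition minsize (sg : {ffun 'I_N -> 'I_s}) : nat :=
  \big[minn/N]_(i < s) #|[set t | sg t == i]|.

(* lexicographic code of (sigma(1),...,sigma(N)), first coordinate most
   significant: smaller code = lexicographically smaller *)
Definition lexcode (sg : {ffun 'I_N -> 'I_s}) : nat :=
  \sum_(t < N) sg t * s ^ (N - t.+1).

Definition selected (A : 'M[R]_(n, s)) (sg : {ffun 'I_N -> 'I_s}) : bool :=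
  [&& admissible A sg,
      [forall g, admissible A g ==> (minsize g <= minsize sg)%N] &
      [forall g, (admissible A g && (minsize g == minsize sg)) ==>
                 (lexcode sg <= lexcode g)%N]].

(* phi(A) in R^N (row vector); the pick always succeeds when s >= 1 *)
Definition phi (A : 'M[R]_(n, s)) : 'rV[R]_N :=
  \row_t (if [pick sg | selected A sg] is Some sg then resid A t (sg t) else 0).

Definition l1 (v : 'rV[R]_N) : R := \sum_(t < N) `|v 0 t|.
Definition l1_on (T : {set 'I_N}) (v : 'rV[R]_N) : R := \sum_(t in T) `|v 0 t|.
Definition l0 (w : 'rV[R]_N) : nat := #|[set t | w 0 t != 0]|.

Definition J (A : 'M[R]_(n, s)) : R := l1 (phi A).

Definition delta (r : nat) (A : 'M[R]_(n, s)) : R :=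
  inf [set l1 (phi A - w) | w in [set w : 'rV[R]_N | (l0 w <= r)%N]].

Definition xi (r : nat) : R :=
  sup [set q | exists (A A' : 'M[R]_(n, s)) (T : {set 'I_N}),
        [/\ phi A <> phi A', (#|T| <= r)%N &
            q = l1_on T (phi A - phi A') / l1 (phi A - phi A')]].

End Switched.

(* Main.v *)
Require Import Defs.
From HB Require Import structures.
From mathcomp Require Import all_boot all_order all_algebra.
From mathcomp Require Import boolp classical_sets reals lra.
Import Order.TTheory GRing.Theory Num.Theory.
Local Open Scope ring_scope.

Section Aux.
Variables (R : realType) (n s N : nat).
Variables (x : 'I_N -> 'rV[R]_n) (y : 'I_N -> R).

Lemma l0E (w : 'rV[R]_N) : l0 w = #|[set t : 'I_N | w 0 t != 0]|.
Proof.
rewrite /l0; apply: eq_card => t; rewrite [RHS]inE.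
by rewrite /in_mem /= /in_set /= asboolb.
Qed.

Lemma l1_onE (T : {set 'I_N}) (v : 'rV[R]_N) :
  l1_on T v = \sum_(t < N) (if t \in T then `|v 0 t| else 0).
Proof. by rewrite /l1_on big_mkcond. Qed.

Lemma l1_on_le (T : {set 'I_N}) (v : 'rV[R]_N) : l1_on T v <= l1 v.
Proof.
rewrite l1_onE /l1; apply: ler_sum => t _; case: ifP => _ //.
Qed.

Lemma l1_ge0 (v : 'rV[R]_N) : 0 <= l1 v.
Proof. by apply: sumr_ge0 => t _. Qed.

Lemma xi_bound (r : nat) (A A' : 'M[R]_(n, s)) (T : {set 'I_N}) :
  (#|T| <= r)%N ->
  l1_on T (phi x y A' - phi x y A) <= xi s x y r * l1 (phi x y A' - phi x y A).
Proof.
move=> hT.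
have [e|ne] := eqVneq (phi x y A') (phi x y A).
  rewrite e subrr /l1_on /l1.
  under eq_bigr do rewrite mxE normr0.
  under [X in _ <= _ * X]eq_bigr do rewrite mxE normr0.
  by rewrite !big1 ?mulr0.
set v := phi x y A' - phi x y A.
have vpos : 0 < l1 v.
  rewrite lt_neqAle l1_ge0 andbT; apply/eqP => h0.
  move/eqP: ne; apply; apply/eqP; rewrite -subr_eq0; apply/eqP.
  apply/rowP => t; rewrite mxE.
  have : `|v 0 t| == 0.
    rewrite eq_le normr_ge0 andbT.
    rewrite [X in _ <= X]h0 /l1 (bigD1 t) //= lerDl.
    by apply: sumr_ge0 => i _.
  rewrite normr_eq0 => /eqP; rewrite /v !mxE => ->; by [].
rewrite /xi; set E := (X in sup X).
have Eq : E (l1_on T v / l1 v).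
  exists A', A, T; split=> //; exact/eqP.
have hs : has_sup E.
  split; first by exists (l1_on T v / l1 v).
  exists 1 => q [B [B' [U [_ _ ->]]]].
  have g := l1_ge0 (phi x y B - phi x y B').
  have [->|p0] := eqVneq (l1 (phi x y B - phi x y B')) 0.
    by rewrite invr0 mulr0.
  have p : 0 < l1 (phi x y B - phi x y B') by rewrite lt_neqAle eq_sym p0 g.
  by rewrite ler_pdivrMr // mul1r l1_on_le.
have := sup_upper_bound hs Eq.
by rewrite ler_pdivrMr.
Qed.

End Aux.

Theorem mainTheorem3 (R : realType) (n s N : nat)
  (hn : (0 < n)%N) (hs : (0 < s)%N) (hN : (0 < N)%N)
  (x : 'I_N -> 'rV[R]_n) (y : 'I_N -> R) (r : nat) (hr : (r <= N)%N)
  (hxi : xi s x y r < 1 / 2) (A A' : 'M[R]_(n, s)) :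
  l1 (phi x y A' - phi x y A) <=
    (1 - 2 * xi s x y r)^-1 * (delta x y r A' + delta x y r A).
Proof.
set u := phi x y A'; set z := phi x y A; set v := u - z.
set k := xi s x y r.
have kpos : 0 < 1 - 2 * k.
  by rewrite subr_gt0 -ltr_pdivlMl // mulrC.
have key : forall w w' : 'rV[R]_N, (l0 w <= r)%N -> (l0 w' <= r)%N ->
    (1 - 2 * k) * l1 v <= l1 (u - w) + l1 (z - w').
  move=> w w'; rewrite !l0E.
  set T := [set t | w 0 t != 0]; set T' := [set t | w' 0 t != 0] => hw hw'.
  have h1 : l1_on T v <= k * l1 v := xi_bound R n s N x y r A A' T hw.
  have h2 : l1_on (T' :\: T) v <= k * l1 v.
    apply: (xi_bound R n s N x y r A A'); apply: leq_trans hw'; apply: subset_leq_card.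
    exact: subsetDl.
  suff : l1 v <= l1_on T v + l1_on (T' :\: T) v + (l1 (u - w) + l1 (z - w')).
    move=> h; rewrite mulrBl mul1r -mulrA; lra.
  rewrite !l1_onE /l1 -!big_split /=; apply: ler_sum => t _.
  case: (boolP (t \in T)) => tT.
    rewrite -addrA lerDl; apply: addr_ge0; first by case: ifP.
    by apply: addr_ge0.
  case: (boolP (t \in T' :\: T)) => tT'.
    by rewrite add0r lerDl addr_ge0.
  rewrite !add0r.
  have w0 : w 0 t = 0 by move: tT; rewrite inE negbK => /eqP.
  have w'0 : w' 0 t = 0.
    have tT'' : t \notin T' by apply: contraNN tT' => h; rewrite inE tT h.
    by move: tT''; rewrite inE negbK => /eqP.
  rewrite !mxE w0 w'0 !subr0.
  by rewrite (le_trans (ler_normB _ _)).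
have ne : forall B : 'M[R]_(n, s),
    ([set l1 (phi x y B - w) | w in [set w : 'rV[R]_N | (l0 w <= r)%N]] !=set0)%classic.
  move=> B; exists (l1 (phi x y B - 0)); exists 0 => //=.
  rewrite l0E; apply: leq_trans (leq0n r); rewrite leqn0 cards_eq0.
  by apply/eqP/setP => t; rewrite !inE mxE eqxx.
have step : forall w' : 'rV[R]_N, (l0 w' <= r)%N ->
    (1 - 2 * k) * l1 v - l1 (z - w') <= delta x y r A'.
  move=> w' hw'; apply: lb_le_inf; first exact: ne.
  move=> q [w hw <-]; have := key w w' hw hw'; lra.
have step2 : (1 - 2 * k) * l1 v - delta x y r A' <= delta x y r A.
  apply: lb_le_inf; first exact: ne.
  move=> q [w' hw' <-]; have := step w' hw'; lra.
rewrite ler_pdivlMl //; lra.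
Qed.
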